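(* All zeros of $c$, $s$, $d$ lie on the three rays $\{-\zeta_2^{j}x: x\ge 0\}$, $j\in\{-1,0,1\}$ (the bisectors of the sectors $S_p=\{z:\frac{2\pi}{3}(p-1)<\arg z<\frac{2\pi p}{3}\}$, $p=1,2,3$). More precisely, the zero sets of $c,s,d$ are respectively $\{-\zeta_2^{j}x_c(k)\}$, $\{-\zeta_2^{j}x_s(k)\}$, $\{-\zeta_2^{j}x_d(k)\}$ ($j\in\{-1,0,1\}$, $k\ge1$), where $0<x_c(1)<x_c(2)<\dots$ are the positive roots of $\cos\frac{\sqrt3}{2}x=-\frac12e^{-\frac32x}$, $0=x_s(1)<x_s(2)<\dots$ are the nonnegative roots of $\sin\left(\frac{\sqrt3}{2}x+\frac\pi6\right)=\frac12e^{-\frac32x}$, and $0=x_d(1)<x_d(2)<\dots$ are the nonnegative roots of $\sin\left(\frac{\sqrt3}{2}x-\frac\pi6\right)=-\frac12e^{-\frac32x}$; all these roots of the respective real equations are simple. Moreover, the sequence $(x_d(k))$ interlaces with $(x_s(k))$, and $(x_s(k))$ interlaces with $(x_c(k))$.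
   Context: Let $\zeta_1=1$, $\zeta_2=-\frac12+\frac{\sqrt3}{2}i$, $\zeta_3=-\frac12-\frac{\sqrt3}{2}i$ be the cube roots of unity. For $z\in\mathbb C$ define $c(z)=\frac13\sum_{k=1}^3 e^{z\zeta_k}$, $s(z)=\frac13\sum_{k=1}^3\zeta_k^{-1}e^{z\zeta_k}$, $d(z)=\frac13\sum_{k=1}^3\zeta_k^{-2}e^{z\zeta_k}$. *)

(* Defs.v *)
From Stdlib Require Import Reals.
From Coquelicot Require Export Coquelicot.
Open Scope R_scope.

Definition cexp (z : C) : C :=
  (exp (fst z) * cos (snd z), exp (fst z) * sin (snd z)).

Definition zeta1 : C := RtoC 1.
Definition zeta2 : C := (-1/2, sqrt 3 / 2).
Definition zeta3 : C := (-1/2, - (sqrt 3 / 2)).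

Open Scope C_scope.

Definition cfun (z : C) : C :=
  (cexp (zeta1 * z) + cexp (zeta2 * z) + cexp (zeta3 * z)) / 3.
Definition sfun (z : C) : C :=
  (/ zeta1 * cexp (zeta1 * z) + / zeta2 * cexp (zeta2 * z)
     + / zeta3 * cexp (zeta3 * z)) / 3.
Definition dfun (z : C) : C :=
  (/ (zeta1 ^ 2) * cexp (zeta1 * z) + / (zeta2 ^ 2) * cexp (zeta2 * z)
     + / (zeta3 ^ 2) * cexp (zeta3 * z)) / 3.

Close Scope C_scope.

Definition eqc (x : R) : R := cos (sqrt 3 / 2 * x) - (- (1/2) * exp (- (3/2) * x)).
Definition eqs (x : R) : R := sin (sqrt 3 / 2 * x + PI / 6) - (1/2) * exp (- (3/2) * x).
Definition eqd (x : R) : R := sin (sqrt 3 / 2 * x - PI / 6) - (- (1/2) * exp (- (3/2) * x)).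

Definition on_rays (z : C) (x : R) : Prop :=
  exists w : C, (w = Cinv zeta2 \/ w = RtoC 1 \/ w = zeta2) /\ z = Copp (Cmult w (RtoC x)).

Definition simple_root (f : R -> R) (x : R) : Prop :=
  exists l : R, is_derive f x l /\ l <> 0.

(* Main.v *)
Require Import Defs.
From Stdlib Require Import Reals Lra Lia Psatz ZArith.
From Coquelicot Require Import Coquelicot.
Open Scope R_scope.
Close Scope C_scope. Open Scope R_scope.

Lemma s3sq : sqrt 3 * sqrt 3 = 3.
Proof. apply sqrt_sqrt; lra. Qed.
Lemma s3pos : 0 < sqrt 3.
Proof. apply sqrt_lt_R0; lra. Qed.

Lemma sign_pow k : (-1)^k = 1 \/ (-1)^k = -1.
Proof. induction k; simpl; [left; lra|destruct IHk as [->| ->]; [right|left]; lra]. Qed.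

Lemma cos_k r k : cos (r + INR k * PI) = (-1)^k * cos r.
Proof.
  induction k.
  - simpl. rewrite Rmult_0_l, Rplus_0_r; ring.
  - rewrite S_INR. replace (r + (INR k + 1) * PI) with ((r + INR k * PI) + PI) by ring.
    rewrite neg_cos, IHk. simpl. ring.
Qed.

Lemma exists_N y : exists N : nat, y < INR N * PI.
Proof.
  destruct (archimed (y / PI)) as [H1 _].
  assert (HP := PI_RGT_0).
  destruct (Z_lt_le_dec (up (y/PI)) 0) as [Hl|Hl].
  - exists 0%nat. simpl. apply IZR_lt in Hl. 
    assert (y / PI < 0) by lra.
    assert (y < 0). { apply Rmult_lt_reg_r with (/PI). apply Rinv_0_lt_compat; lra.
      rewrite Rmult_0_l. exact H. }
    lra.
  - exists (Z.to_nat (up (y/PI))). rewrite INR_IZR_INZ, Z2Nat.id by lia.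
    assert (y = y / PI * PI) by (field; lra).
    rewrite H at 1. apply Rmult_lt_compat_r; lra.
Qed.

Lemma floor_pi y : 0 <= y -> exists k : nat, INR k * PI <= y < INR k * PI + PI.
Proof.
  intros Hy. destruct (exists_N y) as [N HN]. revert y Hy HN.
  induction N; intros y Hy HN.
  - simpl in HN. assert (HP := PI_RGT_0). lra.
  - destruct (Rlt_or_le y (INR N * PI)) as [Hl|Hl].
    + apply IHN; auto.
    + exists N. rewrite S_INR in HN. lra.
Qed.

Lemma cos_ge_half r : 0 <= r <= PI/3 -> 1/2 <= cos r.
Proof.
  intros [H1 H2]. assert (HP := PI_RGT_0). rewrite <- cos_PI3.
  destruct (Rle_lt_or_eq_dec _ _ H2) as [H|H].
  - left. apply cos_decreasing_1; lra.
  - rewrite H; lra.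
Qed.

Lemma cos_le_mhalf r : 2*(PI/3) <= r <= PI -> cos r <= -1/2.
Proof.
  intros [H1 H2]. assert (HP := PI_RGT_0). rewrite <- cos_2PI3.
  destruct (Rle_lt_or_eq_dec _ _ H1) as [H|H].
  - left. apply cos_decreasing_1; lra.
  - rewrite H; lra.
Qed.

Lemma interval_of u : - (PI/3) < u -> cos u ^ 2 < 1/4 ->
  exists k : nat, INR k * PI + PI/3 < u < INR k * PI + 2*(PI/3).
Proof.
  intros Hu Hc. assert (HP := PI_RGT_0).
  destruct (Rlt_or_le u 0) as [Hn|Hn].
  - rewrite <- cos_neg in Hc. assert (H := cos_ge_half (-u) ltac:(lra)). nra.
  - destruct (floor_pi u Hn) as [k [Hk1 Hk2]]. exists k.
    set (r := u - INR k * PI).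
    assert (Hcu : cos u = (-1)^k * cos r).
    { rewrite <- cos_k. unfold r. f_equal. ring. }
    assert (Hc2 : cos u ^ 2 = cos r ^ 2).
    { rewrite Hcu. destruct (sign_pow k) as [-> | ->]; ring. }
    rewrite Hc2 in Hc.
    destruct (Rle_or_lt r (PI/3)) as [H1|H1].
    + assert (H := cos_ge_half r ltac:(unfold r in *; lra)). nra.
    + destruct (Rle_or_lt (2*(PI/3)) r) as [H2|H2].
      * assert (H := cos_le_mhalf r ltac:(unfold r in *; lra)). nra.
      * unfold r in *; lra.
Qed.

Lemma cos2_le u k : INR k * PI + PI/3 <= u <= INR k * PI + 2*(PI/3) -> cos u ^ 2 <= 1/4.
Proof.
  intros Hu. assert (HP := PI_RGT_0).
  set (r := u - INR k * PI).
  assert (Hcu : cos u = (-1)^k * cos r).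
  { rewrite <- cos_k. unfold r. f_equal. ring. }
  assert (Hc2 : cos u ^ 2 = cos r ^ 2).
  { rewrite Hcu. destruct (sign_pow k) as [-> | ->]; ring. }
  rewrite Hc2.
  assert (Ha : cos r <= 1/2).
  { rewrite <- cos_PI3. destruct (Rle_lt_or_eq_dec (PI/3) r ltac:(unfold r; lra)) as [H|H].
    - left; apply cos_decreasing_1; unfold r in *; lra.
    - rewrite H; lra. }
  assert (Hb : -1/2 <= cos r).
  { rewrite <- cos_2PI3. destruct (Rle_lt_or_eq_dec r (2*(PI/3)) ltac:(unfold r; lra)) as [H|H].
    - left; apply cos_decreasing_1; unfold r in *; lra.
    - rewrite H; lra. }
  nra.
Qed.

Lemma cos_k_pi3 k : cos (INR k * PI + PI/3) ^ 2 = 1/4.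
Proof.
  rewrite Rplus_comm, cos_k, cos_PI3. destruct (sign_pow k) as [-> | ->]; field.
Qed.
Lemma cos_k_2pi3 k : cos (INR k * PI + 2*(PI/3)) ^ 2 = 1/4.
Proof.
  rewrite Rplus_comm, cos_k, cos_2PI3. destruct (sign_pow k) as [-> | ->]; field.
Qed.
Close Scope C_scope. Open Scope R_scope.

Definition f (sg dl x : R) := cos (sqrt 3 / 2 * x + dl) + sg * (/2 * exp (- (3/2) * x)).
Definition df (sg dl x : R) :=
  - (sqrt 3 / 2) * sin (sqrt 3 / 2 * x + dl) - sg * (3/4 * exp (- (3/2) * x)).

Lemma f_deriv sg dl x : is_derive (f sg dl) x (df sg dl x).
Proof. unfold f, df. auto_derive; auto. field. Qed.

Lemma f_cont sg dl : continuity (f sg dl).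
Proof.
  intros x. apply continuity_pt_filterlim. apply (ex_derive_continuous (f sg dl)).
  eexists. apply f_deriv.
Qed.

Lemma E_bounds x : 0 < x -> 0 < exp (- (3/2) * x) < 1.
Proof.
  intros Hx. split. apply exp_pos. rewrite <- exp_0. apply exp_increasing. lra.
Qed.

Lemma root_cos2 sg dl x : sg ^ 2 = 1 -> 0 < x -> f sg dl x = 0 ->
  cos (sqrt 3 / 2 * x + dl) ^ 2 < 1/4.
Proof.
  intros Hs Hx Hf. unfold f in Hf. destruct (E_bounds x Hx) as [H1 H2].
  assert (cos (sqrt 3 / 2 * x + dl) = - sg * (/2 * exp (- (3/2) * x))) by lra.
  rewrite H. nra.
Qed.

Lemma df_nz sg dl x : sg ^ 2 = 1 -> 0 < x -> cos (sqrt 3 / 2 * x + dl) ^ 2 <= 1/4 ->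
  df sg dl x <> 0.
Proof.
  intros Hs Hx Hc Hd. unfold df in Hd. destruct (E_bounds x Hx) as [H1 H2].
  assert (Hss := sin2_cos2 (sqrt 3 / 2 * x + dl)).
  assert (H3 := s3sq).
  set (S := sin (sqrt 3 / 2 * x + dl)) in *. set (Cc := cos (sqrt 3 / 2 * x + dl)) in *.
  set (E := exp (- (3 / 2) * x)) in *.
  assert (HS : sqrt 3 / 2 * S = - sg * (3/4 * E)) by lra.
  assert (HS2 : (sqrt 3 / 2 * S)^2 = (3/4*E)^2) by (rewrite HS; nra).
  unfold Rsqr in Hss.
  assert (HS3: 3/4 * (S*S) = (3/4*E)^2) by (rewrite <- HS2; field_simplify; rewrite ?H3; nra).
  nra.
Qed.

Lemma root_in sg dl x : sg ^ 2 = 1 -> - (PI/3) <= dl -> 0 < x -> f sg dl x = 0 ->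
  exists k : nat, INR k * PI + PI/3 < sqrt 3 / 2 * x + dl < INR k * PI + 2*(PI/3).
Proof.
  intros Hs Hd Hx Hf. apply interval_of.
  - assert (0 < sqrt 3 / 2 * x). { assert (H:=s3pos). nra. } lra.
  - apply (root_cos2 sg dl x); auto.
Qed.

Lemma root_unique sg dl k x y : sg ^ 2 = 1 -> 0 < x -> 0 < y ->
  INR k * PI + PI/3 <= sqrt 3 / 2 * x + dl <= INR k * PI + 2*(PI/3) ->
  INR k * PI + PI/3 <= sqrt 3 / 2 * y + dl <= INR k * PI + 2*(PI/3) ->
  f sg dl x = 0 -> f sg dl y = 0 -> x = y.
Proof.
  intros Hs Hx Hy Hix Hiy Hfx Hfy. assert (Hp := s3pos).
  assert (gen : forall a b, 0 < a -> 0 < b ->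
    INR k * PI + PI/3 <= sqrt 3 / 2 * a + dl <= INR k * PI + 2*(PI/3) ->
    INR k * PI + PI/3 <= sqrt 3 / 2 * b + dl <= INR k * PI + 2*(PI/3) ->
    f sg dl a = 0 -> f sg dl b = 0 -> a < b -> False).
  { intros a b Ha Hb Hia Hib Hfa Hfb Hab.
    destruct (MVT_cor2 (f sg dl) (df sg dl) a b Hab) as [c [Hc1 Hc2]].
    - intros c _. apply is_derive_Reals. apply f_deriv.
    - rewrite Hfa, Hfb in Hc1.
      assert (Hcc : cos (sqrt 3 / 2 * c + dl) ^ 2 <= 1/4).
      { apply (cos2_le _ k). split; nra. }
      apply (df_nz sg dl c Hs ltac:(lra) Hcc).
      assert (Hz : df sg dl c * (b - a) = 0) by lra.
      apply Rmult_integral in Hz. destruct Hz as [H|H]; [exact H|lra]. }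
  destruct (Rtotal_order x y) as [H|[H|H]]; auto.
  - exfalso; apply (gen x y); auto.
  - exfalso; apply (gen y x); auto.
Qed.

Lemma root_exists sg dl k : sg ^ 2 = 1 -> 0 < INR k * PI + PI/3 - dl ->
  {x | 0 < x /\ INR k * PI + PI/3 < sqrt 3 / 2 * x + dl < INR k * PI + 2*(PI/3)
       /\ f sg dl x = 0}.
Proof.
  intros Hs Hk. assert (Hp := s3pos). assert (HP := PI_RGT_0).
  set (xa := (INR k * PI + PI/3 - dl) / (sqrt 3 / 2)).
  set (xb := (INR k * PI + 2*(PI/3) - dl) / (sqrt 3 / 2)).
  assert (Hua : sqrt 3 / 2 * xa + dl = INR k * PI + PI/3) by (unfold xa; field; lra).
  assert (Hub : sqrt 3 / 2 * xb + dl = INR k * PI + 2*(PI/3)) by (unfold xb; field; lra).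
  assert (Hxa : 0 < xa) by (unfold xa; apply Rdiv_lt_0_compat; lra).
  assert (Hab : xa <= xb) by (unfold xa, xb; apply Rmult_le_compat_r; [left; apply Rinv_0_lt_compat; lra| lra]).
  assert (Hprod : f sg dl xa * f sg dl xb <= 0).
  { unfold f. rewrite Hua, Hub.
    rewrite (Rplus_comm (INR k * PI)), (Rplus_comm (INR k * PI)), !cos_k, cos_PI3, cos_2PI3.
    destruct (E_bounds xa Hxa) as [Ea1 Ea2].
    destruct (E_bounds xb ltac:(lra)) as [Eb1 Eb2].
    set (Ea := exp (- (3 / 2) * xa)) in *. set (Eb := exp (- (3 / 2) * xb)) in *.
    assert (Hsg : sg = 1 \/ sg = -1) by (destruct (Rle_or_lt 0 sg); [left|right]; nra).
    destruct (sign_pow k) as [-> | ->]; destruct Hsg as [-> | ->]; nra. }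
  destruct (IVT_cor (f sg dl) xa xb (f_cont sg dl) Hab Hprod) as [x [[Hx1 Hx2] Hfx]].
  exists x.
  assert (Hx : 0 < x) by lra.
  assert (Hc := root_cos2 sg dl x Hs Hx Hfx).
  assert (H1 : sqrt 3 / 2 * x + dl <> INR k * PI + PI/3).
  { intro H. rewrite H, cos_k_pi3 in Hc. lra. }
  assert (H2 : sqrt 3 / 2 * x + dl <> INR k * PI + 2*(PI/3)).
  { intro H. rewrite H, cos_k_2pi3 in Hc. lra. }
  repeat split; auto.
  - assert (sqrt 3 / 2 * xa <= sqrt 3 / 2 * x) by (apply Rmult_le_compat_l; lra). lra.
  - assert (sqrt 3 / 2 * x <= sqrt 3 / 2 * xb) by (apply Rmult_le_compat_l; lra). lra.
Qed.
Close Scope C_scope. Open Scope R_scope.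

Lemma sin2_le x : sin x ^ 2 <= x ^ 2.
Proof.
  assert (gen : forall y, 0 <= y -> sin y ^ 2 <= y ^ 2).
  { intros y Hy. destruct (Rle_lt_or_eq_dec _ _ Hy) as [H|H].
    - assert (H1 := sin_lt_x y H).
      assert (H2 : - y <= sin y).
      { destruct (Rle_or_lt 1 y). assert (Hb := SIN_bound y). lra.
        assert (0 < sin y). { apply sin_gt_0; auto. assert (HP := PI_RGT_0).
          assert (Hp4 := PI2_1). lra. } lra. }
      nra.
    - subst. rewrite sin_0. lra. }
  destruct (Rle_or_lt 0 x) as [H|H]. auto.
  rewrite <- (Ropp_involutive x), sin_neg. replace ((- - x)^2) with ((-x)^2) by ring.
  replace ((- sin (-x))^2) with (sin (-x) ^ 2) by ring. apply gen; lra.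
Qed.

Lemma sinh_ge b : 4 * b ^ 2 <= (exp b - exp (- b)) ^ 2.
Proof.
  assert (gen : forall y, 0 <= y -> 2 * y <= exp y - exp (- y)).
  { intros y Hy. destruct (Rle_lt_or_eq_dec _ _ Hy) as [H|H].
    - set (h := fun t => exp t - exp (- t) - 2 * t).
      destruct (MVT_cor2 h (fun t => exp t + exp (- t) - 2) 0 y H) as [c [Hc1 Hc2]].
      + intros c _. apply is_derive_Reals. unfold h. auto_derive; auto. ring.
      + unfold h in Hc1. rewrite Ropp_0, exp_0 in Hc1.
        assert (He : exp c * exp (- c) = 1) by (rewrite <- exp_plus; replace (c + - c) with 0 by ring; apply exp_0).
        assert (exp c > 0) by apply exp_pos. assert (exp (-c) > 0) by apply exp_pos.
        assert (Hq : 0 <= (exp c - exp (- c))^2) by apply pow2_ge_0.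
        assert (exp c + exp (- c) - 2 >= 0) by nra.
        nra.
    - subst. rewrite Ropp_0, exp_0. lra. }
  destruct (Rle_or_lt 0 b) as [H|H].
  - assert (H1 := gen b H). nra.
  - assert (H1 := gen (- b) ltac:(lra)). rewrite Ropp_involutive in H1. nra.
Qed.

Lemma core A T Em Ep C' S' b :
  0 < A -> A <= 1 -> Em * Ep = 1 -> C' ^ 2 + S' ^ 2 = 1 ->
  A * cos T + (Em + Ep) * C' = 0 -> A * sin T + (Em - Ep) * S' = 0 ->
  T = 3 / 2 * b -> 3 * b ^ 2 <= (Ep - Em) ^ 2 -> b = 0.
Proof.
  intros HA HA1 HE HCS Hc Hs HT HD.
  destruct (Req_dec b 0) as [|Hb]; auto. exfalso.
  set (D := Ep - Em) in *.
  assert (Hcs := sin2_cos2 T). unfold Rsqr in Hcs.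
  assert (HsT := sin2_le T).
  assert (HA2 : A ^ 2 = D ^ 2 + 4 * C' ^ 2).
  { assert (A ^ 2 = (A * cos T) ^ 2 + (A * sin T) ^ 2) by nra.
    rewrite H. replace (A * cos T) with (- (Em + Ep) * C') by lra.
    replace (A * sin T) with (D * S') by (unfold D; lra).
    assert ((Em + Ep)^2 = D^2 + 4) by (unfold D; nra). nra. }
  assert (Hb2 : 0 < b ^ 2) by (apply pow2_gt_0; auto).
  assert (HDS : D ^ 2 * S' ^ 2 <= A ^ 2 * (9/4 * b ^ 2)).
  { replace (D^2 * S'^2) with ((A * sin T)^2) by (replace (A * sin T) with (D * S') by (unfold D; lra); ring).
    assert (A^2 * sin T ^2 <= A^2 * T^2) by (apply Rmult_le_compat_l; [nra|exact HsT]). rewrite HT in H. nra. }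
  assert (HS' : S' ^ 2 <= 3/4 * A ^ 2).
  { assert (3 * b^2 * S'^2 <= A ^ 2 * (9/4 * b ^ 2)) by nra.
    nra. }
  nra.
Qed.
Close Scope C_scope. Open Scope R_scope.

Lemma pair_eq (a b c d : R) : a = c -> b = d -> (a, b) = (c, d).
Proof. intros -> ->; reflexivity. Qed.

Lemma cexp_add u v : cexp (Cplus u v) = Cmult (cexp u) (cexp v).
Proof.
  destruct u as [a b], v as [c d]. unfold cexp, Cplus, Cmult; simpl.
  rewrite exp_plus, cos_plus, sin_plus. apply pair_eq; ring.
Qed.

Lemma cexp_nz u : cexp u <> RtoC 0.
Proof.
  destruct u as [a b]. unfold cexp, RtoC; simpl. intro H. injection H as H1 H2.
  assert (He := exp_pos a). assert (Hc := sin2_cos2 b). unfold Rsqr in Hc.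
  assert (cos b = 0) by (apply Rmult_integral in H1; destruct H1; lra).
  assert (sin b = 0) by (apply Rmult_integral in H2; destruct H2; lra). nra.
Qed.

Lemma z22 : Cmult zeta2 zeta2 = zeta3.
Proof. unfold zeta2, zeta3, Cmult; simpl. assert (H := s3sq). apply pair_eq; nra. Qed.
Lemma z32 : Cmult zeta3 zeta2 = RtoC 1.
Proof. unfold zeta2, zeta3, Cmult, RtoC; simpl. assert (H := s3sq). apply pair_eq; nra. Qed.
Lemma z33 : Cmult zeta3 zeta3 = zeta2.
Proof. unfold zeta2, zeta3, Cmult; simpl. assert (H := s3sq). apply pair_eq; nra. Qed.
Lemma inv2 : Cinv zeta2 = zeta3.
Proof. unfold zeta2, zeta3, Cinv; cbn [fst snd]. assert (H := s3sq).
  replace ((-1/2)^2 + (sqrt 3 / 2)^2) with 1 by nra. apply pair_eq; field. Qed.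
Lemma inv3 : Cinv zeta3 = zeta2.
Proof. unfold zeta2, zeta3, Cinv; cbn [fst snd]. assert (H := s3sq).
  replace ((-1/2)^2 + (- (sqrt 3 / 2))^2) with 1 by nra. apply pair_eq; field. Qed.

Open Scope C_scope.

Definition Pw (w2 w3 z : C) : C := cexp z + w2 * cexp (zeta2 * z) + w3 * cexp (zeta3 * z).

Lemma rot w2 w3 z : w2 * w3 = 1 -> w3 * w3 = w2 -> Pw w2 w3 (zeta2 * z) = w3 * Pw w2 w3 z.
Proof.
  intros H1 H2. unfold Pw.
  rewrite !Cmult_assoc, z22, z32, Cmult_1_l.
  transitivity (w3 * cexp z + (w2 * w3) * cexp (zeta2 * z) + (w3 * w3) * cexp (zeta3 * z)).
  - rewrite H1, H2. ring.
  - ring.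
Qed.

Lemma mP a b p q :
  cexp (a/2, b/2)%R * Pw (p, q) (p, - q)%R (a, b) =
  ((exp (3/2*a) * cos (3/2*b) + (exp (- (sqrt 3/2*b)) + exp (sqrt 3/2*b)) *
      (p * cos (sqrt 3/2*a) - q * sin (sqrt 3/2*a)))%R,
   (exp (3/2*a) * sin (3/2*b) + (exp (- (sqrt 3/2*b)) - exp (sqrt 3/2*b)) *
      (p * sin (sqrt 3/2*a) + q * cos (sqrt 3/2*a)))%R).
Proof.
  unfold Pw.
  transitivity (cexp ((a/2,b/2)%R + (a,b)) + (p,q) * cexp ((a/2,b/2)%R + zeta2 * (a,b))
     + (p, -q)%R * cexp ((a/2,b/2)%R + zeta3 * (a,b))).
  { rewrite !cexp_add. ring. }
  replace ((a/2,b/2)%R + (a,b)) with ((3/2*a, 3/2*b)%R)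
    by (unfold Cplus; simpl; apply pair_eq; field).
  replace ((a/2,b/2)%R + zeta2 * (a,b)) with ((- (sqrt 3/2*b), sqrt 3/2*a)%R)
    by (unfold Cplus, Cmult, zeta2; simpl; apply pair_eq; field).
  replace ((a/2,b/2)%R + zeta3 * (a,b)) with ((sqrt 3/2*b, - (sqrt 3/2*a))%R)
    by (unfold Cplus, Cmult, zeta3; simpl; apply pair_eq; field).
  unfold cexp, Cplus, Cmult; simpl. rewrite cos_neg, sin_neg.
  apply pair_eq; ring.
Qed.
Close Scope C_scope. Open Scope R_scope.

Lemma sector a b p q : p ^ 2 + q ^ 2 = 1 -> a <= 0 -> Pw (p, q) (p, - q) (a, b) = RtoC 0 -> b = 0.
Proof.
  intros Hpq Ha HP.
  assert (H := mP a b p q). rewrite HP, Cmult_0_r in H.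
  unfold RtoC in H. injection H as H1 H2.
  apply (core (exp (3/2*a)) (3/2*b) (exp (- (sqrt 3/2*b))) (exp (sqrt 3/2*b))
           (p * cos (sqrt 3/2*a) - q * sin (sqrt 3/2*a))
           (p * sin (sqrt 3/2*a) + q * cos (sqrt 3/2*a)) b).
  - apply exp_pos.
  - rewrite <- exp_0. destruct (Rle_lt_or_eq_dec _ _ Ha) as [Hl|Hl].
    + left; apply exp_increasing; lra.
    + subst; right; f_equal; ring.
  - rewrite <- exp_plus. replace (- (sqrt 3 / 2 * b) + sqrt 3 / 2 * b) with 0 by ring. apply exp_0.
  - assert (Hc := sin2_cos2 (sqrt 3/2*a)). unfold Rsqr in Hc.
    transitivity ((p^2+q^2) * (sin (sqrt 3 / 2 * a) * sin (sqrt 3 / 2 * a) + cos (sqrt 3 / 2 * a) * cos (sqrt 3 / 2 * a))).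
    + ring.
    + rewrite Hpq, Hc. ring.
  - lra.
  - lra.
  - reflexivity.
  - assert (Hs := sinh_ge (sqrt 3 / 2 * b)). assert (H3 := s3sq).
    replace (4 * (sqrt 3 / 2 * b) ^ 2) with (3 * b^2) in Hs by (field_simplify; rewrite ?H3; nra).
    exact Hs.
Qed.

Lemma realline a p q : Pw (p, q) (p, - q) (a, 0) = RtoC 0 <->
  exp (3/2*a) + 2 * (p * cos (sqrt 3/2*a) - q * sin (sqrt 3/2*a)) = 0.
Proof.
  assert (H := mP a 0 p q).
  rewrite !Rmult_0_r, Ropp_0, exp_0, cos_0, sin_0 in H.
  split.
  - intro HP. rewrite HP, Cmult_0_r in H. unfold RtoC in H. injection H as H1 H2. lra.
  - intro He. set (m := cexp (a / 2, 0 / 2)) in *.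
    assert (Hm : m <> RtoC 0) by apply cexp_nz.
    assert (HmP : (m * Pw (p, q) (p, (- q)%R) (a, 0))%C = RtoC 0).
    { rewrite H. unfold RtoC. apply pair_eq; lra. }
    transitivity ((/ m * m) * Pw (p, q) (p, (- q)%R) (a, 0))%C.
    + rewrite Cinv_l by exact Hm. ring.
    + rewrite <- Cmult_assoc, HmP. ring.
Qed.

Open Scope C_scope.

Lemma cancel_w w2 w3 y : w2 * w3 = 1 -> w3 * y = 0 -> y = 0.
Proof.
  intros H1 H2. transitivity ((w2 * w3) * y). rewrite H1; ring.
  rewrite <- Cmult_assoc, H2. ring.
Qed.

Lemma zeros w2 w3 p q (X : nat -> R) :
  w2 = (p, q) -> w3 = (p, - q)%R -> (p ^ 2 + q ^ 2)%R = 1%R ->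
  w2 * w3 = 1 -> w3 * w3 = w2 ->
  (forall x, (0 <= x /\ Pw w2 w3 (RtoC (- x)) = 0)%R <-> exists k, x = X k) ->
  forall z, Pw w2 w3 z = 0 <-> exists k, on_rays z (X k).
Proof.
  intros Hw2 Hw3 Hpq H1 H2 HX z. split.
  - intro HP.
    assert (gen : forall z', Pw w2 w3 z' = 0 -> (fst z' <= 0)%R ->
               exists k, z' = RtoC (- X k)).
    { intros [a b] HP' Ha. simpl in Ha. rewrite Hw2, Hw3 in HP'.
      assert (Hb := sector a b p q Hpq Ha HP'). subst b.
      destruct (proj1 (HX (- a)%R)) as [k Hk].
      { split. lra. rewrite Ropp_involutive, Hw2, Hw3. exact HP'. }
      exists k. rewrite <- Hk. unfold RtoC. apply pair_eq; ring. }
    assert (Hsum : (fst z + fst (zeta2 * z)%C + fst (zeta2 * (zeta2 * z))%C = 0)%R).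
    { rewrite Cmult_assoc, z22. destruct z as [a b]. unfold zeta2, zeta3, Cmult; simpl. lra. }
    assert (HP2 : Pw w2 w3 (zeta2 * z) = 0) by (rewrite rot, HP by auto; ring).
    assert (HP3 : Pw w2 w3 (zeta2 * (zeta2 * z)) = 0) by (rewrite rot, HP2 by auto; ring).
    destruct (Rle_or_lt (fst z) 0) as [Ha|Ha].
    + destruct (gen z HP Ha) as [k Hk]. exists k. exists (RtoC 1). split. auto.
      rewrite Hk. unfold RtoC, Copp, Cmult; simpl. apply pair_eq; ring.
    + destruct (Rle_or_lt (fst (zeta2 * z)) 0) as [Hb|Hb].
      * destruct (gen _ HP2 Hb) as [k Hk]. exists k. exists (Cinv zeta2). split. auto.
        rewrite inv2.
        assert (Hz : z = zeta3 * (zeta2 * z)) by (rewrite Cmult_assoc, z32; ring).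
        rewrite Hz, Hk. unfold RtoC, Copp, Cmult; simpl. apply pair_eq; ring.
      * assert (Hc : (fst (zeta2 * (zeta2 * z))%C <= 0)%R) by lra.
        destruct (gen _ HP3 Hc) as [k Hk]. exists k. exists zeta2. split. auto.
        assert (Hz : z = zeta2 * (zeta2 * (zeta2 * z))).
        { rewrite !Cmult_assoc, z22, z32. ring. }
        rewrite Hz, Hk. unfold RtoC, Copp, Cmult; simpl. apply pair_eq; ring.
  - intros [k [w [Hw Hz]]].
    destruct (proj2 (HX (X k)) (ex_intro _ k eq_refl)) as [_ H0].
    assert (H31 : w3 * w2 = 1) by (rewrite Cmult_comm; exact H1).
    destruct Hw as [Hw|[Hw|Hw]]; subst w.
    + apply (cancel_w w2 w3); auto. rewrite <- rot by auto.
      replace (zeta2 * z) with (RtoC (- X k)); auto.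
      rewrite Hz, inv2.
      replace (zeta2 * - (zeta3 * X k)) with (- ((zeta3 * zeta2) * X k)) by ring.
      rewrite z32. unfold RtoC, Copp, Cmult; simpl. apply pair_eq; ring.
    + replace z with (RtoC (- X k)); auto.
      rewrite Hz. unfold RtoC, Copp, Cmult; simpl. apply pair_eq; ring.
    + apply (cancel_w w2 w3); auto. apply (cancel_w w2 w3); auto.
      rewrite <- !rot by auto.
      replace (zeta2 * (zeta2 * z)) with (RtoC (- X k)); auto.
      rewrite Hz.
      replace (zeta2 * (zeta2 * - (zeta2 * X k))) with (- (((zeta2 * zeta2) * zeta2) * X k)) by ring.
      rewrite z22, z32. unfold RtoC, Copp, Cmult; simpl. apply pair_eq; ring.
Qed.
Close Scope C_scope. Open Scope R_scope.

Lemma Lc x : cos (sqrt 3 / 2 * x) = - (1/2) * exp (- (3/2) * x) <-> f 1 0 x = 0.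
Proof. unfold f. rewrite Rplus_0_r. split; intro; lra. Qed.

Lemma sin_s x : sin (sqrt 3 / 2 * x + PI / 6) = cos (sqrt 3 / 2 * x + - (PI/3)).
Proof.
  rewrite <- cos_shift. rewrite <- cos_neg. f_equal. field.
Qed.
Lemma Ls x : sin (sqrt 3 / 2 * x + PI / 6) = (1/2) * exp (- (3/2) * x) <-> f (-1) (- (PI/3)) x = 0.
Proof. unfold f. rewrite sin_s. split; intro; lra. Qed.

Lemma sin_d x : sin (sqrt 3 / 2 * x - PI / 6) = - cos (sqrt 3 / 2 * x + PI/3).
Proof.
  rewrite <- cos_shift. rewrite <- (cos_neg (sqrt 3 / 2 * x + PI / 3)), <- neg_cos. f_equal. field.
Qed.
Lemma Ld x : sin (sqrt 3 / 2 * x - PI / 6) = - (1/2) * exp (- (3/2) * x) <-> f (-1) (PI/3) x = 0.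
Proof. unfold f. rewrite sin_d. split; intro; lra. Qed.

Lemma expE x : exp (3/2 * - x) = exp (- (3/2) * x).
Proof. f_equal; ring. Qed.

Lemma RLc x : exp (3/2 * - x) + 2 * (1 * cos (sqrt 3/2 * - x) - 0 * sin (sqrt 3/2 * - x)) = 0
  <-> cos (sqrt 3 / 2 * x) = - (1/2) * exp (- (3/2) * x).
Proof.
  rewrite expE. replace (sqrt 3 / 2 * - x) with (- (sqrt 3 / 2 * x)) by ring.
  rewrite cos_neg. split; intro; lra.
Qed.

Lemma RLs x : exp (3/2 * - x) + 2 * (-1/2 * cos (sqrt 3/2 * - x) - - (sqrt 3 / 2) * sin (sqrt 3/2 * - x)) = 0
  <-> sin (sqrt 3 / 2 * x + PI / 6) = (1/2) * exp (- (3/2) * x).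
Proof.
  rewrite expE. replace (sqrt 3 / 2 * - x) with (- (sqrt 3 / 2 * x)) by ring.
  rewrite cos_neg, sin_neg, sin_plus, cos_PI6, sin_PI6. split; intro; lra.
Qed.

Lemma RLd x : exp (3/2 * - x) + 2 * (-1/2 * cos (sqrt 3/2 * - x) - (sqrt 3 / 2) * sin (sqrt 3/2 * - x)) = 0
  <-> sin (sqrt 3 / 2 * x - PI / 6) = - (1/2) * exp (- (3/2) * x).
Proof.
  rewrite expE. replace (sqrt 3 / 2 * - x) with (- (sqrt 3 / 2 * x)) by ring.
  rewrite cos_neg, sin_neg, sin_minus, cos_PI6, sin_PI6. split; intro; lra.
Qed.

Lemma d_noroot x : 0 < x -> sqrt 3 / 2 * x + PI/3 < 2 * (PI/3) -> f (-1) (PI/3) x < 0.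
Proof.
  intros Hx Hu. assert (Hp := s3pos). assert (HP := PI_RGT_0). assert (H3 := s3sq).
  destruct (MVT_cor2 (f (-1) (PI/3)) (df (-1) (PI/3)) 0 x Hx) as [c [Hc1 Hc2]].
  - intros c _. apply is_derive_Reals. apply f_deriv.
  - assert (Hf0 : f (-1) (PI/3) 0 = 0).
    { unfold f. rewrite Rmult_0_r, Rplus_0_l, Rmult_0_r, exp_0, cos_PI3. lra. }
    rewrite Hf0 in Hc1.
    assert (Hd : df (-1) (PI/3) c < 0).
    { unfold df. destruct (E_bounds c ltac:(lra)) as [E1 E2].
      assert (Hcc : 0 < sqrt 3 / 2 * c) by nra.
      assert (Hxc : sqrt 3 / 2 * c < sqrt 3 / 2 * x) by nra.
      assert (Hs : 0 < sin (sqrt 3 / 2 * c + PI / 3)) by (apply sin_gt_0; lra).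
      assert (Hc2' := cos2_le (sqrt 3 / 2 * c + PI / 3) 0 ltac:(simpl; lra)).
      assert (Hsc := sin2_cos2 (sqrt 3 / 2 * c + PI / 3)). unfold Rsqr in Hsc.
      set (S := sin (sqrt 3 / 2 * c + PI / 3)) in *.
      set (Cc := cos (sqrt 3 / 2 * c + PI / 3)) in *.
      assert (HS : sqrt 3 / 2 <= S) by nra.
      assert (3/4 <= sqrt 3 / 2 * S) by nra.
      nra. }
    nra.
Qed.
Close Scope C_scope. Open Scope R_scope.

Lemma lt_s3 a b : sqrt 3 / 2 * a < sqrt 3 / 2 * b -> a < b.
Proof. intro H. assert (Hp := s3pos). apply Rmult_lt_reg_l with (sqrt 3 / 2); lra. Qed.

Lemma div3 (X : C) : (X / 3)%C = RtoC 0 <-> X = RtoC 0.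
Proof.
  split; intro H.
  - transitivity ((X / 3) * 3)%C. field. rewrite H. apply Cmult_0_l.
  - rewrite H. unfold Cdiv. apply Cmult_0_l.
Qed.

Lemma cfunP z : cfun z = (Pw (RtoC 1) (RtoC 1) z / 3)%C.
Proof. unfold cfun, Pw, zeta1. rewrite Cmult_1_l, !Cmult_1_l. reflexivity. Qed.

Lemma inv1 : Cinv (RtoC 1) = RtoC 1.
Proof. unfold Cinv, RtoC; cbn [fst snd]. apply pair_eq; field. Qed.

Lemma sfunP z : sfun z = (Pw zeta3 zeta2 z / 3)%C.
Proof. unfold sfun, Pw, zeta1. rewrite inv1, inv2, inv3, !Cmult_1_l. reflexivity. Qed.

Lemma dfunP z : dfun z = (Pw zeta2 zeta3 z / 3)%C.
Proof.
  unfold dfun, Pw.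
  change (zeta1 ^ 2)%C with (zeta1 * (zeta1 * 1))%C.
  change (zeta2 ^ 2)%C with (zeta2 * (zeta2 * 1))%C.
  change (zeta3 ^ 2)%C with (zeta3 * (zeta3 * 1))%C.
  rewrite !Cmult_1_r, z22, z33, inv2, inv3. unfold zeta1. rewrite inv1, !Cmult_1_l. reflexivity.
Qed.
Close Scope C_scope. Open Scope R_scope.

Lemma nz_helper Sv Cc E a : 0 < E < 1 -> Sv^2 + Cc^2 = 1 -> Cc = a * E -> a^2 = 1/4 ->
  sqrt 3 / 2 * Sv + 3/4 * E <> 0 /\ sqrt 3 / 2 * Sv - 3/4 * E <> 0.
Proof.
  intros HE HSC HC Ha. assert (H33 := s3sq).
  assert (gen : forall sg, sg ^ 2 = 1 -> sqrt 3 / 2 * Sv + sg * (3/4 * E) <> 0).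
  { intros sg Hsg Hz. assert (HS : sqrt 3 / 2 * Sv = - sg * (3/4 * E)) by lra.
    assert (H1 : (sqrt 3 / 2 * Sv)^2 = (sg * (3/4*E))^2) by (rewrite HS; ring).
    replace ((sqrt 3 / 2 * Sv)^2) with (sqrt 3 * sqrt 3 * Sv^2 / 4) in H1 by (simpl; field).
    rewrite H33 in H1. replace ((sg * (3/4*E))^2) with (sg^2 * (9/16 * E^2)) in H1 by field.
    rewrite Hsg in H1. rewrite HC in HSC.
    assert (H2 : Sv^2 = 1 - a^2 * E^2) by (rewrite <- HSC; ring).
    rewrite Ha in H2. nra. }
  split.
  - replace (sqrt 3 / 2 * Sv + 3/4 * E) with (sqrt 3 / 2 * Sv + 1 * (3/4 * E)) by ring. apply gen; ring.
  - replace (sqrt 3 / 2 * Sv - 3/4 * E) with (sqrt 3 / 2 * Sv + (-1) * (3/4 * E)) by ring. apply gen; ring.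
Qed.

Lemma dc x : is_derive eqc x (- (sqrt 3 / 2 * sin (sqrt 3 / 2 * x) + 3/4 * exp (- (3/2) * x))).
Proof. unfold eqc. auto_derive; auto. field. Qed.
Lemma ds x : is_derive eqs x (sqrt 3 / 2 * cos (sqrt 3 / 2 * x + PI/6) + 3/4 * exp (- (3/2) * x)).
Proof. unfold eqs. auto_derive; auto. field. Qed.
Lemma dd x : is_derive eqd x (sqrt 3 / 2 * cos (sqrt 3 / 2 * x - PI/6) - 3/4 * exp (- (3/2) * x)).
Proof. unfold eqd. auto_derive; auto. unfold Rminus. field. Qed.

Lemma simple_c x : 0 < x -> cos (sqrt 3 / 2 * x) = - (1/2) * exp (- (3/2) * x) -> simple_root eqc x.
Proof.
  intros Hx He. eexists. split. apply dc.
  assert (Hsc := sin2_cos2 (sqrt 3 / 2 * x)). unfold Rsqr in Hsc.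
  destruct (nz_helper (sin (sqrt 3 / 2 * x)) (cos (sqrt 3 / 2 * x)) (exp (- (3/2) * x)) (-(1/2)))
    as [H1 _]; auto. apply E_bounds; auto. nra. nra. lra.
Qed.

Lemma simple_s x : 0 <= x -> sin (sqrt 3 / 2 * x + PI / 6) = (1/2) * exp (- (3/2) * x) -> simple_root eqs x.
Proof.
  intros Hx He. eexists. split. apply ds.
  destruct (Rle_lt_or_eq_dec _ _ Hx) as [Hx'|Hx'].
  - assert (Hsc := sin2_cos2 (sqrt 3 / 2 * x + PI/6)). unfold Rsqr in Hsc.
    destruct (nz_helper (cos (sqrt 3 / 2 * x + PI/6)) (sin (sqrt 3 / 2 * x + PI/6)) (exp (- (3/2) * x)) (1/2))
      as [H1 _]; auto. apply E_bounds; auto. nra. nra.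
  - subst x. rewrite Rmult_0_r, Rplus_0_l, Rmult_0_r, exp_0, cos_PI6. assert (H33 := s3sq). nra.
Qed.

Lemma simple_d x : 0 < x -> sin (sqrt 3 / 2 * x - PI / 6) = - (1/2) * exp (- (3/2) * x) -> simple_root eqd x.
Proof.
  intros Hx He. eexists. split. apply dd.
  assert (Hsc := sin2_cos2 (sqrt 3 / 2 * x - PI/6)). unfold Rsqr in Hsc.
  destruct (nz_helper (cos (sqrt 3 / 2 * x - PI/6)) (sin (sqrt 3 / 2 * x - PI/6)) (exp (- (3/2) * x)) (-(1/2)))
    as [_ H1]; auto. apply E_bounds; auto. nra. nra.
Qed.
Close Scope C_scope. Open Scope R_scope.

Lemma sg1 : 1 ^ 2 = 1. Proof. ring. Qed.
Lemma sgm : (-1) ^ 2 = 1. Proof. ring. Qed.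
Lemma pc k : 0 < INR k * PI + PI/3 - 0.
Proof. assert (HP := PI_RGT_0). assert (H := pos_INR k). nra. Qed.
Lemma ps k : 0 < INR k * PI + PI/3 - - (PI/3).
Proof. assert (HP := PI_RGT_0). assert (H := pos_INR k). nra. Qed.
Lemma pd k : 0 < INR (S k) * PI + PI/3 - PI/3.
Proof. assert (HP := PI_RGT_0). rewrite S_INR. assert (H := pos_INR k). nra. Qed.

Theorem lemma1p2 :
  exists xc xs xd : nat -> R,
    (forall k, xc k < xc (S k)) /\
    (forall k, xs k < xs (S k)) /\
    (forall k, xd k < xd (S k)) /\
    (forall x, (0 < x /\ cos (sqrt 3 / 2 * x) = - (1/2) * exp (- (3/2) * x))
                <-> exists k, x = xc k) /\
    (forall x, (0 <= x /\ sin (sqrt 3 / 2 * x + PI / 6) = (1/2) * exp (- (3/2) * x))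
                <-> exists k, x = xs k) /\
    (forall x, (0 <= x /\ sin (sqrt 3 / 2 * x - PI / 6) = - (1/2) * exp (- (3/2) * x))
                <-> exists k, x = xd k) /\
    0 < xc 0%nat /\ xs 0%nat = 0 /\ xd 0%nat = 0 /\
    (forall z, cfun z = RtoC 0 <-> exists k, on_rays z (xc k)) /\
    (forall z, sfun z = RtoC 0 <-> exists k, on_rays z (xs k)) /\
    (forall z, dfun z = RtoC 0 <-> exists k, on_rays z (xd k)) /\
    (forall k, simple_root eqc (xc k)) /\
    (forall k, simple_root eqs (xs k)) /\
    (forall k, (0 < k)%nat -> simple_root eqd (xd k)) /\
    (forall k, xs k <= xd k /\ xd k < xs (S k)) /\
    (forall k, xs k < xc k /\ xc k < xs (S k)).
Proof.
  set (tc := fun k => proj1_sig (root_exists 1 0 k sg1 (pc k))).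
  set (ts := fun k => proj1_sig (root_exists (-1) (- (PI/3)) k sgm (ps k))).
  set (td := fun k => proj1_sig (root_exists (-1) (PI/3) (S k) sgm (pd k))).
  assert (Hc : forall k, 0 < tc k /\ INR k * PI + PI/3 < sqrt 3 / 2 * tc k + 0 < INR k * PI + 2*(PI/3)
       /\ f 1 0 (tc k) = 0) by (intro k; exact (proj2_sig (root_exists 1 0 k sg1 (pc k)))).
  assert (Hs : forall k, 0 < ts k /\ INR k * PI + PI/3 < sqrt 3 / 2 * ts k + - (PI/3) < INR k * PI + 2*(PI/3)
       /\ f (-1) (- (PI/3)) (ts k) = 0)
    by (intro k; exact (proj2_sig (root_exists (-1) (- (PI/3)) k sgm (ps k)))).
  assert (Hd : forall k, 0 < td k /\ INR (S k) * PI + PI/3 < sqrt 3 / 2 * td k + PI/3 < INR (S k) * PI + 2*(PI/3)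
       /\ f (-1) (PI/3) (td k) = 0)
    by (intro k; exact (proj2_sig (root_exists (-1) (PI/3) (S k) sgm (pd k)))).
  clearbody tc ts td.
  set (xs := fun k => match k with O => 0 | S j => ts j end).
  set (xd := fun k => match k with O => 0 | S j => td j end).
  assert (HP := PI_RGT_0). assert (Hp3 := s3pos). assert (H33 := s3sq).
  assert (Cc : forall x, (0 < x /\ cos (sqrt 3 / 2 * x) = - (1/2) * exp (- (3/2) * x))
                <-> exists k, x = tc k).
  { intro x. split.
    - intros [Hx He]. apply Lc in He.
      destruct (root_in 1 0 x sg1 ltac:(lra) Hx He) as [k Hk]. exists k.
      destruct (Hc k) as [H1 [H2 H3]].
      apply (root_unique 1 0 k x (tc k) sg1 Hx H1); auto; lra.
    - intros [k ->]. destruct (Hc k) as [H1 [H2 H3]]. split; auto. apply Lc; auto. }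
  assert (Cs : forall x, (0 <= x /\ sin (sqrt 3 / 2 * x + PI / 6) = (1/2) * exp (- (3/2) * x))
                <-> exists k, x = xs k).
  { intro x. split.
    - intros [Hx He]. destruct (Rle_lt_or_eq_dec _ _ Hx) as [Hx'|Hx'].
      + apply Ls in He.
        destruct (root_in (-1) (- (PI/3)) x sgm ltac:(lra) Hx' He) as [k Hk]. exists (S k).
        destruct (Hs k) as [H1 [H2 H3]]. simpl.
        apply (root_unique (-1) (- (PI/3)) k x (ts k) sgm Hx' H1); auto; lra.
      + exists 0%nat. simpl. auto.
    - intros [[|k] ->]; simpl.
      + split. lra. rewrite Rmult_0_r, Rplus_0_l, Rmult_0_r, exp_0, sin_PI6. ring.
      + destruct (Hs k) as [H1 [H2 H3]]. split. lra. apply Ls; auto. }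
  assert (Cd : forall x, (0 <= x /\ sin (sqrt 3 / 2 * x - PI / 6) = - (1/2) * exp (- (3/2) * x))
                <-> exists k, x = xd k).
  { intro x. split.
    - intros [Hx He]. destruct (Rle_lt_or_eq_dec _ _ Hx) as [Hx'|Hx'].
      + apply Ld in He.
        destruct (root_in (-1) (PI/3) x sgm ltac:(lra) Hx' He) as [[|k] Hk].
        * exfalso. simpl in Hk. assert (Hn := d_noroot x Hx' ltac:(lra)). lra.
        * exists (S k). destruct (Hd k) as [H1 [H2 H3]]. simpl.
          apply (root_unique (-1) (PI/3) (S k) x (td k) sgm Hx' H1); auto; lra.
      + exists 0%nat. simpl. auto.
    - intros [[|k] ->]; simpl.
      + split. lra. rewrite Rmult_0_r, Rmult_0_r, exp_0.
        replace (0 - PI / 6) with (- (PI/6)) by ring. rewrite sin_neg, sin_PI6. ring.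
      + destruct (Hd k) as [H1 [H2 H3]]. split. lra. apply Ld; auto. }
  exists tc, xs, xd.
  refine (conj _ (conj _ (conj _ (conj _ (conj _ (conj _ (conj _ (conj _ (conj _ (conj _ (conj _ (conj _ (conj _ (conj _ (conj _ (conj _ _)))))))))))))))).
  - intro k. destruct (Hc k) as [_ [H1 _]]. destruct (Hc (S k)) as [_ [H2 _]].
    rewrite S_INR in H2. apply lt_s3. lra.
  - intros [|k]; simpl.
    + destruct (Hs 0%nat) as [H1 _]. lra.
    + destruct (Hs k) as [_ [H1 _]]. destruct (Hs (S k)) as [_ [H2 _]].
      rewrite S_INR in H2. apply lt_s3. lra.
  - intros [|k]; simpl.
    + destruct (Hd 0%nat) as [H1 _]. lra.
    + destruct (Hd k) as [_ [H1 _]]. destruct (Hd (S k)) as [_ [H2 _]].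
      rewrite S_INR in H1, H2. rewrite S_INR in H2. apply lt_s3. lra.
  - exact Cc.
  - exact Cs.
  - exact Cd.
  - apply Hc.
  - reflexivity.
  - reflexivity.
  - intro z. rewrite cfunP, div3. apply (zeros (RtoC 1) (RtoC 1) 1 0 tc).
    + reflexivity.
    + unfold RtoC; apply pair_eq; ring.
    + field.
    + apply Cmult_1_l.
    + apply Cmult_1_l.
    + intro x. rewrite <- Cc.
      assert (E : Pw (RtoC 1) (RtoC 1) (RtoC (- x)) = Pw (1,0) (1,-0) (-x,0))
        by (unfold RtoC; f_equal; try (apply pair_eq; ring)).
      rewrite E, realline, RLc. split.
      * intros [Hx Hq]. split; auto. destruct (Rle_lt_or_eq_dec _ _ Hx) as [H|H]; auto.
        subst x. rewrite Rmult_0_r, cos_0, Rmult_0_r, exp_0 in Hq. lra.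
      * intros [Hx Hq]. split; auto; lra.
  - intro z. rewrite sfunP, div3. apply (zeros zeta3 zeta2 (-1/2) (- (sqrt 3 / 2)) xs).
    + reflexivity.
    + unfold zeta2; apply pair_eq; ring.
    + nra.
    + apply z32.
    + apply z22.
    + intro x. rewrite <- Cs.
      assert (E : Pw zeta3 zeta2 (RtoC (- x)) = Pw (-1/2, - (sqrt 3 / 2)) (-1/2, - - (sqrt 3 / 2)) (-x,0))
        by (unfold RtoC, zeta2, zeta3; f_equal; try (apply pair_eq; ring)).
      rewrite E, realline, RLs. tauto.
  - intro z. rewrite dfunP, div3. apply (zeros zeta2 zeta3 (-1/2) (sqrt 3 / 2) xd).
    + reflexivity.
    + reflexivity.
    + nra.
    + rewrite Cmult_comm; apply z32.
    + apply z33.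
    + intro x. rewrite <- Cd.
      assert (E : Pw zeta2 zeta3 (RtoC (- x)) = Pw (-1/2, sqrt 3 / 2) (-1/2, - (sqrt 3 / 2)) (-x,0))
        by reflexivity.
      rewrite E, realline, RLd. tauto.
  - intro k. destruct (Hc k) as [H1 [_ H3]]. apply simple_c; auto. apply Lc; auto.
  - intro k. apply simple_s; apply Cs; exists k; reflexivity.
  - intros [|k] Hk. lia. destruct (Hd k) as [H1 [_ H3]]. apply simple_d; auto. apply Ld; auto.
  - intros [|k]; simpl.
    + destruct (Hs 0%nat) as [H1 _]. split; lra.
    + destruct (Hs k) as [_ [H1 _]]. destruct (Hs (S k)) as [_ [H2 _]].
      destruct (Hd k) as [_ [H3 _]].
      rewrite S_INR in H2, H3. split; [left|]; apply lt_s3; lra.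
  - intros [|k]; simpl.
    + destruct (Hs 0%nat) as [_ [H1 _]]. destruct (Hc 0%nat) as [H0 [H2 _]].
      simpl in H1, H2. split; auto. apply lt_s3; lra.
    + destruct (Hs k) as [_ [H1 _]]. destruct (Hs (S k)) as [_ [H2 _]].
      destruct (Hc (S k)) as [_ [H3 _]].
      rewrite S_INR in H2, H3. split; apply lt_s3; lra.
Qed.
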